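(* For every computable endofunctor $d$, the space $\mathbb{S}$ is $d$-admissible, i.e. $\kappa^d:d\mathbb{S}\to\mathcal{C}(\mathcal{O}(\mathbb{S}),d\mathbb{S})$ is injective and has a computable inverse on its image.
   Context: Represented spaces are pairs $(X,\delta_X)$ with $\delta_X:\subseteq\{0,1\}^\mathbb{N}\to X$ a partial surjection; computable/continuous maps are those with computable/continuous realizers; $\mathcal{C}(\mathbf{X},\mathbf{Y})$ is the represented space of continuous maps. $\mathbb{S}=(\{\bot,\top\},\delta_\mathbb{S})$, $\delta_\mathbb{S}(0^\mathbb{N})=\bot$, $\delta_\mathbb{S}(p)=\top$ otherwise; $\mathcal{O}(\mathbf{Y})=\mathcal{C}(\mathbf{Y},\mathbb{S})$. A computable endofunctor is an endofunctor $d$ on the category of represented spaces and continuous maps such that each $f\mapsto df:\mathcal{C}(\mathbf{X},\mathbf{Y})\to\mathcal{C}(d\mathbf{X},d\mathbf{Y})$ is computable. $\kappa^d:d\mathbf{Y}\to\mathcal{C}(\mathcal{O}(\mathbf{Y}),d\mathbb{S})$ is $\kappa^d(y)(U)=(dU)(y)$; $\mathbf{Y}$ is $d$-admissible if $\kappa^d$ is computably invertible on its image. *)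

(* Defs.v *)
From Stdlib Require Import List Arith.
Import ListNotations.

Definition Cantor := nat -> bool.

Definition prefix (p : Cantor) (k : nat) : list bool := map p (seq 0 k).

Fixpoint enc (w : list bool) : nat :=
  match w with
  | [] => 1
  | b :: w' => 2 * enc w' + (if b then 1 else 0)
  end.

(** output-bit coding: false |-> 1, true |-> 2 (any other value = "no output yet") *)
Definition bcode (b : bool) : nat := if b then 2 else 1.

Definition npair (a b : nat) : nat := (a + b) * (a + b + 1) / 2 + b.

Inductive code : Type :=
| CZero : code
| CSucc : code
| CProj : nat -> code
| CComp : code -> list code -> code
| CPrim : code -> code -> code
| CMu   : code -> code.

Inductive eval : code -> list nat -> nat -> Prop :=
| ev_zero : forall xs, eval CZero xs 0
| ev_succ : forall xs, eval CSucc xs (S (nth 0 xs 0))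
| ev_proj : forall i xs, eval (CProj i) xs (nth i xs 0)
| ev_comp : forall f gs xs ys v,
    Forall2 (fun g y => eval g xs y) gs ys -> eval f ys v -> eval (CComp f gs) xs v
| ev_prim0 : forall f g xs v, eval f xs v -> eval (CPrim f g) (0 :: xs) v
| ev_primS : forall f g n xs r v,
    eval (CPrim f g) (n :: xs) r -> eval g (n :: r :: xs) v ->
    eval (CPrim f g) (S n :: xs) v
| ev_mu : forall f xs v,
    eval f (v :: xs) 0 ->
    (forall k, k < v -> exists m, eval f (k :: xs) (S m)) ->
    eval (CMu f) xs v.

(** * Realizers via (partial) word functions
    [M w n c] : on input prefix w, the machine answers c about output bit n
    (c = bcode b means "bit n is b"). *)
Definition computes (M : list bool -> nat -> nat -> Prop) (p q : Cantor) : Prop :=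
  forall n,
    (exists k, M (prefix p k) n (bcode (q n))) /\
    (forall k b, M (prefix p k) n (bcode b) -> b = q n).

Definition realizes {A B : Type} (rA : Cantor -> A -> Prop) (rB : Cantor -> B -> Prop)
  (M : list bool -> nat -> nat -> Prop) (f : A -> B) : Prop :=
  forall p x, rA p x -> exists q, computes M p q /\ rB q (f x).

Definition machine (e : code) : list bool -> nat -> nat -> Prop :=
  fun w n c => eval e [enc w; n] c.

(** continuous realizer: arbitrary (total) word function *)
Definition cont_machine (M : list bool -> nat -> nat) : list bool -> nat -> nat -> Prop :=
  fun w n c => M w n = c.

(** * Represented spaces: partial surjections delta :⊆ Cantor -> X,
    given as single-valued surjective relations *)
Record RepSpace : Type := {
  carrier :> Type;
  rep : Cantor -> carrier -> Prop;
  rep_functional : forall p x y, rep p x -> rep p y -> x = y;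
  rep_surjective : forall x : carrier, exists p, rep p x
}.

Arguments rep {_}.

Definition continuous_map (X Y : RepSpace) (f : X -> Y) : Prop :=
  exists M, realizes (@rep X) (@rep Y) (cont_machine M) f.

Definition Hom (X Y : RepSpace) : Type := {f : X -> Y | continuous_map X Y f}.

(** * The function-space representation of C(X,Y):
    p names f iff p is the graph table of a word function M realizing f,
    i.e. p <<enc w, n>, c> = (M w n =? c). *)
Definition fun_rep {A B : Type} (rA : Cantor -> A -> Prop) (rB : Cantor -> B -> Prop)
  (p : Cantor) (f : A -> B) : Prop :=
  exists M : list bool -> nat -> nat,
    (forall w n c, p (npair (npair (enc w) n) c) = Nat.eqb (M w n) c) /\
    realizes rA rB (cont_machine M) f.

Definition hom_rep (X Y : RepSpace) : Cantor -> Hom X Y -> Prop :=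
  fun p f => fun_rep (@rep X) (@rep Y) p (proj1_sig f).

(** * Sierpinski space: bottom = false, top = true; delta(0^N) = bottom,
    delta(p) = top otherwise *)
Definition sier_rep (p : Cantor) (b : bool) : Prop :=
  b = true <-> exists n, p n = true.

Lemma sier_rep_functional : forall p x y, sier_rep p x -> sier_rep p y -> x = y.
Proof.
  unfold sier_rep; intros p x y Hx Hy.
  destruct x, y; try reflexivity.
  - exfalso. destruct Hx as [H1 _]. specialize (H1 eq_refl).
    destruct Hy as [_ H2]. discriminate (H2 H1).
  - exfalso. destruct Hy as [H1 _]. specialize (H1 eq_refl).
    destruct Hx as [_ H2]. discriminate (H2 H1).
Qed.

Lemma sier_rep_surjective : forall b, exists p, sier_rep p b.
Proof.
  intros b; exists (fun _ => b); unfold sier_rep; destruct b; split; intros H.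
  - exists 0; reflexivity.
  - reflexivity.
  - discriminate.
  - destruct H; assumption.
Qed.

Definition Sier : RepSpace :=
  {| carrier := bool; rep := sier_rep;
     rep_functional := sier_rep_functional;
     rep_surjective := sier_rep_surjective |}.

Definition Opens (Y : RepSpace) : Type := Hom Y Sier.

(** * Endofunctors on the category of represented spaces and continuous maps.
    (Morphisms are continuous maps; functor laws are stated on the
    underlying functions.) *)
Record Endofunctor : Type := {
  fobj :> RepSpace -> RepSpace;
  fmap : forall X Y : RepSpace, Hom X Y -> Hom (fobj X) (fobj Y);
  fmap_id : forall (X : RepSpace) (i : Hom X X),
      (forall x, proj1_sig i x = x) ->
      forall x, proj1_sig (fmap X X i) x = x;
  fmap_comp : forall (X Y Z : RepSpace) (f : Hom X Y) (g : Hom Y Z) (h : Hom X Z),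
      (forall x, proj1_sig h x = proj1_sig g (proj1_sig f x)) ->
      forall x, proj1_sig (fmap X Z h) x =
                proj1_sig (fmap Y Z g) (proj1_sig (fmap X Y f) x)
}.

Arguments fmap _ {X Y}.

Definition computable_endofunctor (d : Endofunctor) : Prop :=
  forall X Y : RepSpace,
    exists e : code,
      realizes (hom_rep X Y) (hom_rep (d X) (d Y)) (machine e) (@fmap d X Y).

Definition kappa (d : Endofunctor) (Y : RepSpace) (y : d Y) : Opens Y -> d Sier :=
  fun U => proj1_sig (fmap d U) y.

(** representation of C(O(Y), dS) on (plain) functions O(Y) -> dS *)
Definition kappa_target_rep (d : Endofunctor) (Y : RepSpace) :
  Cantor -> (Opens Y -> d Sier) -> Prop :=
  fun_rep (hom_rep Y Sier) (@rep (d Sier)).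

Definition d_admissible (d : Endofunctor) (Y : RepSpace) : Prop :=
  (forall y1 y2 : d Y, kappa d Y y1 = kappa d Y y2 -> y1 = y2) /\
  (exists e : code,
     forall (y : d Y) (p : Cantor),
       kappa_target_rep d Y p (kappa d Y y) ->
       exists q, computes (machine e) p q /\ rep q y).

(* Main.v *)
Require Import Defs.
From Stdlib Require Import List Arith Lia.
Import ListNotations.

Definition cnd (t y z : nat) := match t with 0 => y | S _ => z end.
Fixpoint par n := match n with 0 => 0 | S n => cnd (par n) 1 0 end.
Fixpoint dv2 n := match n with 0 => 0 | S n => dv2 n + par n end.
Fixpoint shr x k := match k with 0 => x | S k => dv2 (shr x k) end.
Fixpoint tri s := match s with 0 => 0 | S s => tri s + S s end.
Fixpoint sdiag i := match i with 0 => 0 | S i => cnd (tri (S (sdiag i)) - S i) (S (sdiag i)) (sdiag i) end.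
Definition usnd i := i - tri (sdiag i).
Definition ufst i := sdiag i - usnd i.
Definition eqf x y := (x - y) + (y - x).
Definition M0' a n := cnd (eqf (shr a (S n)) 1) (S (par (shr a n))) 0.
Definition p0val i := eqf (M0' (ufst (ufst i)) (usnd (ufst i))) (usnd i).
Definition p0 : Cantor := fun i => Nat.eqb (p0val i) 0.
Fixpoint pw2 k := match k with 0 => 1 | S k => pw2 k + pw2 k end.
Fixpoint E K := match K with 0 => 1 | S K => E K + pw2 K + cnd (p0val K) (pw2 K) 0 end.
Definition npair' a b := tri (a + b) + b.
Definition II K n c := npair' (npair' (E K) n) c.
Definition goodf x I := cnd (shr x (S I)) 1 (1 - par (shr x I)).
Definition condf K x n := cnd (goodf x (II K n 1)) 0 (goodf x (II K n 2)).
Definition outf K x n := cnd (goodf x (II K n 1)) 1 2.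

Fixpoint cc k := match k with 0 => CZero | S k => CComp CSucc [cc k] end.
Definition P := CProj.
Definition c_add := CPrim (P 0) (CComp CSucc [P 1]).
Definition c_pred := CPrim CZero (P 0).
Definition c_sub := CPrim (P 0) (CComp c_pred [P 1]).
Definition c_minus := CComp c_sub [P 1; P 0].
Definition c_cond := CPrim (P 0) (P 3).
Definition c_par := CPrim CZero (CComp c_cond [P 1; cc 1; cc 0]).
Definition c_dv2 := CPrim CZero (CComp c_add [P 1; CComp c_par [P 0]]).
Definition c_shr := CPrim (P 0) (CComp c_dv2 [P 1]).
Definition c_tri := CPrim CZero (CComp c_add [P 1; CComp CSucc [P 0]]).
Definition c_sdiag := CPrim CZero (CComp c_cond
   [CComp c_minus [CComp c_tri [CComp CSucc [P 1]]; CComp CSucc [P 0]]; CComp CSucc [P 1]; P 1]).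
Definition c_usnd := CComp c_minus [P 0; CComp c_tri [c_sdiag]].
Definition c_ufst := CComp c_minus [c_sdiag; c_usnd].
Definition c_eqf := CComp c_add [c_minus; CComp c_minus [P 1; P 0]].
Definition c_npair := CComp c_add [CComp c_tri [c_add]; P 1].
Definition c_M0 := CComp c_cond [CComp c_eqf [CComp c_shr [CComp CSucc [P 1]; P 0]; cc 1];
                                 CComp CSucc [CComp c_par [CComp c_shr [P 1; P 0]]]; cc 0].
Definition c_p0val := CComp c_eqf [CComp c_M0 [CComp c_ufst [c_ufst]; CComp c_usnd [c_ufst]]; c_usnd].
Definition c_pw2 := CPrim (cc 1) (CComp c_add [P 1; P 1]).
Definition c_E := CPrim (cc 1) (CComp c_add [CComp c_add [P 1; CComp c_pw2 [P 0]];
                    CComp c_cond [CComp c_p0val [P 0]; CComp c_pw2 [P 0]; cc 0]]).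
Definition c_II := CComp c_npair [CComp c_npair [CComp c_E [P 0]; P 1]; P 2].
Definition c_goodf := CComp c_cond [CComp c_shr [CComp CSucc [P 1]; P 0]; cc 1;
                        CComp c_minus [cc 1; CComp c_par [CComp c_shr [P 1; P 0]]]].
Definition g1 := CComp c_goodf [P 1; CComp c_II [P 0; P 2; cc 1]].
Definition g2 := CComp c_goodf [P 1; CComp c_II [P 0; P 2; cc 2]].
Definition c_condf := CComp c_cond [g1; cc 0; g2].
Definition c_outf := CComp c_cond [g1; cc 1; cc 2].
Definition e_main := CComp c_outf [CMu c_condf; P 0; P 1].

Lemma prim_ok f g xs (h : nat -> nat) : eval f xs (h 0) ->
  (forall n, eval g (n :: h n :: xs) (h (S n))) -> forall n, eval (CPrim f g) (n :: xs) (h n).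
Proof. intros H0 HS n; induction n. constructor; auto. econstructor; eauto. Qed.
Lemma comp1 f g xs a v : eval g xs a -> eval f [a] v -> eval (CComp f [g]) xs v.
Proof. intros; econstructor; eauto. Qed.
Lemma comp2 f g1 g2 xs a b v : eval g1 xs a -> eval g2 xs b -> eval f [a;b] v -> eval (CComp f [g1;g2]) xs v.
Proof. intros; econstructor; eauto. Qed.
Lemma comp3 f g1 g2 g3 xs a b c v : eval g1 xs a -> eval g2 xs b -> eval g3 xs c -> eval f [a;b;c] v -> eval (CComp f [g1;g2;g3]) xs v.
Proof. intros; econstructor; eauto. Qed.
Lemma ev_P i xs : eval (P i) xs (nth i xs 0). Proof. constructor. Qed.
Lemma ev_S xs a : eval CSucc (a :: xs) (S a). Proof. exact (ev_succ (a::xs)). Qed.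
Lemma ev_cc k xs : eval (cc k) xs k.
Proof. induction k; simpl. constructor. eapply comp1; eauto. apply ev_S. Qed.

Ltac ev := repeat first [ apply ev_P | apply ev_cc | apply ev_S | eapply comp1 | eapply comp2 | eapply comp3 ].

Lemma ev_add a b xs : eval c_add (a :: b :: xs) (a + b).
Proof. apply (prim_ok _ _ _ (fun n => n + b)). apply ev_P. intros n. ev. Qed.
Global Opaque c_add.
Lemma ev_pred n xs : eval c_pred (n :: xs) (pred n).
Proof. apply (prim_ok _ _ _ pred). constructor. intros; apply ev_P. Qed.
Global Opaque c_pred.
Lemma ev_sub y x xs : eval c_sub (y :: x :: xs) (x - y).
Proof. apply (prim_ok _ _ _ (fun n => x - n)). simpl. rewrite Nat.sub_0_r. apply ev_P.
  intros n. replace (x - S n) with (pred (x - n)) by lia. ev. apply ev_pred. Qed.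
Global Opaque c_sub.
Lemma ev_minus x y xs : eval c_minus (x :: y :: xs) (x - y).
Proof. ev. apply ev_sub. Qed.
Global Opaque c_minus.
Lemma ev_cond t y z xs : eval c_cond (t :: y :: z :: xs) (cnd t y z).
Proof. apply (prim_ok _ _ _ (fun t => cnd t y z)). apply ev_P. intros; apply ev_P. Qed.
Global Opaque c_cond.
Lemma ev_par n xs : eval c_par (n :: xs) (par n).
Proof. apply (prim_ok _ _ _ par). constructor. intros m. ev. apply ev_cond. Qed.
Global Opaque c_par.
Lemma ev_dv2 n xs : eval c_dv2 (n :: xs) (dv2 n).
Proof. apply (prim_ok _ _ _ dv2). constructor. intros m. ev. apply ev_par. apply ev_add. Qed.
Global Opaque c_dv2.
Lemma ev_shr k x xs : eval c_shr (k :: x :: xs) (shr x k).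
Proof. apply (prim_ok _ _ _ (shr x)). apply ev_P. intros m. ev. apply ev_dv2. Qed.
Global Opaque c_shr.
Lemma ev_tri n xs : eval c_tri (n :: xs) (tri n).
Proof. apply (prim_ok _ _ _ tri). constructor. intros m. ev. apply ev_add. Qed.
Global Opaque c_tri.
Lemma ev_sdiag n xs : eval c_sdiag (n :: xs) (sdiag n).
Proof. apply (prim_ok _ _ _ sdiag). constructor. intros m. ev. apply ev_tri. apply ev_minus. apply ev_cond. Qed.
Global Opaque c_sdiag.
Lemma ev_usnd n xs : eval c_usnd (n :: xs) (usnd n).
Proof. ev. apply ev_sdiag. apply ev_tri. apply ev_minus. Qed.
Global Opaque c_usnd.
Lemma ev_ufst n xs : eval c_ufst (n :: xs) (ufst n).
Proof. ev. apply ev_sdiag. apply ev_usnd. apply ev_minus. Qed.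
Global Opaque c_ufst.
Lemma ev_eqf x y xs : eval c_eqf (x :: y :: xs) (eqf x y).
Proof. ev. apply ev_minus. apply ev_minus. apply ev_add. Qed.
Global Opaque c_eqf.
Lemma ev_npair a b xs : eval c_npair (a :: b :: xs) (npair' a b).
Proof. ev. apply ev_add. apply ev_tri. apply ev_add. Qed.
Global Opaque c_npair.
Lemma ev_M0 a n xs : eval c_M0 (a :: n :: xs) (M0' a n).
Proof. ev. apply ev_shr. apply ev_eqf. apply ev_shr. apply ev_par. apply ev_cond. Qed.
Global Opaque c_M0.
Lemma ev_p0val i xs : eval c_p0val (i :: xs) (p0val i).
Proof. ev. apply ev_ufst. apply ev_ufst. apply ev_ufst. apply ev_usnd. apply ev_M0. apply ev_usnd. apply ev_eqf. Qed.
Global Opaque c_p0val.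
Lemma ev_pw2 n xs : eval c_pw2 (n :: xs) (pw2 n).
Proof. apply (prim_ok _ _ _ pw2). apply ev_cc. intros m. ev. apply ev_add. Qed.
Global Opaque c_pw2.
Lemma ev_E n xs : eval c_E (n :: xs) (E n).
Proof. apply (prim_ok _ _ _ E). apply ev_cc. intros m. ev. apply ev_pw2. apply ev_add.
  apply ev_p0val. apply ev_pw2. apply ev_cond. apply ev_add. Qed.
Global Opaque c_E.
Lemma ev_II K n c xs : eval c_II (K :: n :: c :: xs) (II K n c).
Proof. ev. apply ev_E. apply ev_npair. apply ev_npair. Qed.
Global Opaque c_II.
Lemma ev_goodf x I xs : eval c_goodf (x :: I :: xs) (goodf x I).
Proof. ev. apply ev_shr. apply ev_shr. apply ev_par. apply ev_minus. apply ev_cond. Qed.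
Global Opaque c_goodf.
Lemma ev_condf K x n xs : eval c_condf (K :: x :: n :: xs) (condf K x n).
Proof. unfold c_condf, g1, g2. ev. apply ev_II. apply ev_goodf. apply ev_II. apply ev_goodf. apply ev_cond. Qed.
Global Opaque c_condf.
Lemma ev_outf K x n xs : eval c_outf (K :: x :: n :: xs) (outf K x n).
Proof. unfold c_outf, g1. ev. apply ev_II. apply ev_goodf. apply ev_cond. Qed.
Global Opaque c_outf.
Lemma eval_det : forall c xs v, eval c xs v -> forall v', eval c xs v' -> v = v'.
Proof.
  fix IH 4. intros c xs v H v' H'. destruct H.
  - inversion H'; auto.
  - inversion H'; auto.
  - inversion H'; auto.
  - inversion H' as [| | |f' gs' xs' ys0 v0 Hf2 Hv2| | |]; subst.
    assert (ys = ys0) as <-.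
    { clear H0 H' Hv2. revert ys0 Hf2. revert gs ys H.
      fix F 3. intros gs ys H ys0 H4. destruct H.
      + inversion H4; auto.
      + inversion H4; subst. f_equal. eapply IH; eassumption. eapply F; eassumption. }
    eapply IH; eassumption.
  - inversion H'; subst. eapply IH; eassumption.
  - inversion H'; subst. assert (r = r0) as <- by (eapply IH; eassumption). eapply IH; eassumption.
  - inversion H' as [| | | | | |f' xs' v0 Hz Hlt']; subst.
    destruct (lt_eq_lt_dec v v') as [[Hlt|Heq]|Hlt]; auto.
    + destruct (Hlt' v Hlt) as [m Hm]. pose proof (IH _ _ _ H _ Hm). discriminate.
    + destruct (H0 v' Hlt) as [m Hm]. pose proof (IH _ _ _ Hm _ Hz). discriminate.
Qed.

Lemma e_sound x n v : eval e_main [x; n] v -> exists K, condf K x n = 0 /\ v = outf K x n.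
Proof.
  intros H. unfold e_main in H. inversion H as [| | |f gs xs ys v0 Hf Hv| | |]; subst.
  inversion Hf as [|g y gs' ys' Hmu Hr]; subst.
  inversion Hr as [|g' y' gs'' ys'' H0 Hr']; subst.
  inversion Hr' as [|g'' y'' gs3 ys3 H1 Hr'']; subst.
  inversion Hr''; subst.
  inversion H0; subst. inversion H1; subst. simpl in Hv.
  inversion Hmu as [| | | | | |f' xs' v1 Hz Hlt]; subst.
  exists y. split.
  - symmetry. eapply eval_det. apply Hz. apply ev_condf.
  - eapply eval_det. apply Hv. apply ev_outf.
Qed.

Lemma bounded_dec (f : nat -> bool) N :
  (exists k, k <= N /\ f k = true) \/ (forall k, k <= N -> f k = false).
Proof.
  induction N.
  - destruct (f 0) eqn:E0. left; exists 0; auto. right; intros k Hk; replace k with 0 by lia; auto.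
  - destruct IHN as [[k [Hk Hf]]|Hall]. left; exists k; split; auto.
    destruct (f (S N)) eqn:ES. left; exists (S N); auto.
    right; intros k Hk. destruct (Nat.eq_dec k (S N)); subst; auto. apply Hall; lia.
Qed.

Lemma least (f : nat -> bool) K0 : f K0 = true ->
  exists K, f K = true /\ forall k, k < K -> f k = false.
Proof.
  revert K0. induction K0 as [K0 IH] using lt_wf_ind. intros HK.
  destruct K0 as [|N]. exists 0; split; auto; intros; lia.
  destruct (bounded_dec f N) as [[k [Hk Hf]]|Hall].
  - apply (IH k); auto; lia.
  - exists (S N); split; auto. intros k Hk; apply Hall; lia.
Qed.

Lemma e_complete x n K0 : condf K0 x n = 0 ->
  exists K, eval e_main [x; n] (outf K x n) /\ condf K x n = 0.
Proof.
  intros H0. destruct (least (fun K => Nat.eqb (condf K x n) 0) K0) as [K [HK Hlt]].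
  apply Nat.eqb_eq; auto.
  apply Nat.eqb_eq in HK. exists K; split; auto.
  unfold e_main. eapply comp3 with (a := K). 
  - constructor. rewrite <- HK. apply ev_condf.
    intros k Hk. specialize (Hlt k Hk). apply Nat.eqb_neq in Hlt.
    exists (pred (condf k x n)). replace (S (pred (condf k x n))) with (condf k x n) by lia.
    apply ev_condf.
  - apply ev_P.
  - apply ev_P.
  - apply ev_outf.
Qed.

Lemma pd_even m : par (2*m) = 0 /\ dv2 (2*m) = m /\ par (2*m+1) = 1 /\ dv2 (2*m+1) = m.
Proof.
  induction m as [|m [A [B [C D]]]]. simpl; auto.
  replace (2 * S m) with (S (2*m+1)) by lia. replace (S (2*m+1) + 1) with (S (S (2*m+1))) by lia.
  change (par (S (2*m+1))) with (cnd (par (2*m+1)) 1 0).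
  change (dv2 (S (2*m+1))) with (dv2 (2*m+1) + par (2*m+1)).
  change (par (S (S (2*m+1)))) with (cnd (par (S (2*m+1))) 1 0).
  change (dv2 (S (S (2*m+1)))) with (dv2 (S (2*m+1)) + par (S (2*m+1))).
  change (par (S (2*m+1))) with (cnd (par (2*m+1)) 1 0).
  change (dv2 (S (2*m+1))) with (dv2 (2*m+1) + par (2*m+1)).
  rewrite C, D. simpl. lia.
Qed.

Lemma enc_pos w : 1 <= enc w.
Proof. induction w; simpl; lia. Qed.

Lemma par_enc b w : par (enc (b::w)) = (if b then 1 else 0) /\ dv2 (enc (b::w)) = enc w.
Proof. change (enc (b::w)) with (2 * enc w + (if b then 1 else 0)). destruct (pd_even (enc w)) as [A [B [C D]]]. destruct b; [rewrite C, D|rewrite Nat.add_0_r, A, B]; auto. Qed.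

Lemma shr_S' x k : shr x (S k) = shr (dv2 x) k.
Proof. induction k. reflexivity. change (shr x (S (S k))) with (dv2 (shr x (S k))). rewrite IHk. reflexivity. Qed.

Lemma shr_enc w k : k <= length w -> shr (enc w) k = enc (skipn k w).
Proof.
  revert k; induction w as [|b w IH]; intros k Hk.
  - simpl in Hk. replace k with 0 by lia. reflexivity.
  - destruct k. reflexivity. rewrite shr_S'. rewrite (proj2 (par_enc b w)). simpl. apply IH. simpl in Hk; lia.
Qed.

Lemma shr_zero k : shr 0 k = 0.
Proof. induction k; simpl; auto. rewrite IHk; auto. Qed.

Lemma shr_enc_big w k : length w < k -> shr (enc w) k = 0.
Proof.
  intros H. replace k with (S (length w) + (k - S (length w))) by lia.
  generalize (k - S (length w)) as j. intros j.
  assert (shr (enc w) (S (length w)) = 0).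
  { simpl. rewrite shr_enc by lia. rewrite skipn_all. reflexivity. }
  induction j. rewrite Nat.add_0_r; auto. rewrite Nat.add_succ_r. simpl. simpl in IHj. rewrite IHj. auto.
Qed.

Lemma skipn_nth (w : list bool) n : n < length w -> skipn n w = nth n w false :: skipn (S n) w.
Proof.
  revert n; induction w as [|b w IH]; intros n H; simpl in H. lia.
  destruct n. reflexivity. simpl. apply IH. lia.
Qed.

Definition M0 (w : list bool) (n : nat) : nat :=
  if Nat.eqb (length w) (S n) then bcode (nth n w false) else 0.

Lemma M0_enc w n : M0' (enc w) n = M0 w n.
Proof.
  unfold M0', M0. destruct (Nat.eqb_spec (length w) (S n)) as [Hl|Hl].
  - rewrite shr_enc by lia. rewrite skipn_all2 by lia. simpl.
    rewrite shr_enc by lia. rewrite skipn_nth by lia.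
    rewrite (proj1 (par_enc _ _)). destruct (nth n w false); reflexivity.
  - destruct (le_lt_dec (S n) (length w)).
    + rewrite shr_enc by lia. rewrite (skipn_nth w (S n)) by lia.
      assert (Hge : enc (nth (S n) w false :: skipn (S (S n)) w) >= 2).
      { pose proof (enc_pos (skipn (S (S n)) w)). change (enc (?b :: ?r)) with (2 * enc r + (if b then 1 else 0)). lia. }
      revert Hge. generalize (enc (nth (S n) w false :: skipn (S (S n)) w)).
      intros t Ht. unfold eqf. destruct t as [|[|t]]. lia. lia. reflexivity.
    + rewrite shr_enc_big by lia. reflexivity.
Qed.

Lemma tri2 s : 2 * tri s = s * (s + 1).
Proof. induction s; simpl tri; [reflexivity|]. nia. Qed.

Lemma npair_eq a b : npair' a b = npair a b.
Proof.
  unfold npair', npair. pose proof (tri2 (a+b)).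
  replace ((a + b) * (a + b + 1)) with (tri (a+b) * 2) by lia.
  rewrite Nat.div_mul by lia. lia.
Qed.

Lemma tri_mono s t : s <= t -> tri s <= tri t.
Proof. induction 1; simpl; lia. Qed.

Lemma sdiag_inv i : tri (sdiag i) <= i < tri (S (sdiag i)).
Proof.
  induction i. simpl; lia.
  change (sdiag (S i)) with (cnd (tri (S (sdiag i)) - S i) (S (sdiag i)) (sdiag i)).
  destruct (tri (S (sdiag i)) - S i) eqn:Ht; simpl cnd.
  - simpl tri in *. lia.
  - lia.
Qed.

Lemma sdiag_npair a b : sdiag (npair' a b) = a + b.
Proof.
  pose proof (sdiag_inv (npair' a b)) as [H1 H2]. unfold npair' in *.
  destruct (lt_eq_lt_dec (sdiag (tri (a+b) + b)) (a+b)) as [[Hl|He]|Hl]; auto.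
  - apply tri_mono in Hl. lia.
  - apply tri_mono in Hl. simpl tri in *. lia.
Qed.

Lemma unpair_ok a b : usnd (npair' a b) = b /\ ufst (npair' a b) = a.
Proof.
  unfold ufst, usnd. rewrite sdiag_npair. unfold npair'. split; lia.
Qed.

Lemma p0_table w n c : p0 (npair (npair (enc w) n) c) = Nat.eqb (M0 w n) c.
Proof.
  rewrite <- !npair_eq. unfold p0, p0val.
  destruct (unpair_ok (npair' (enc w) n) c) as [A B]. rewrite A, B.
  destruct (unpair_ok (enc w) n) as [C D]. rewrite C, D. rewrite M0_enc.
  unfold eqf. destruct (Nat.eqb_spec (M0 w n) c); apply Nat.eqb_eq || apply Nat.eqb_neq; lia.
Qed.

Lemma pw2_eq k : pw2 (S k) = 2 * pw2 k.
Proof. simpl. lia. Qed.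

Lemma enc_app w b : enc (w ++ [b]) = enc w + pw2 (length w) + (if b then pw2 (length w) else 0).
Proof.
  induction w as [|a w IH]; simpl app; simpl length.
  - simpl. destruct b; reflexivity.
  - change (enc (a :: (w ++ [b]))) with (2 * enc (w ++ [b]) + (if a then 1 else 0)).
    change (enc (a :: w)) with (2 * enc w + (if a then 1 else 0)).
    rewrite IH, pw2_eq. destruct b; lia.
Qed.

Lemma E_eq K : E K = enc (prefix p0 K).
Proof.
  induction K. reflexivity.
  unfold prefix. rewrite seq_S, map_app. simpl map. rewrite enc_app.
  fold (prefix p0 K). rewrite <- IHK. unfold prefix; rewrite length_map, length_seq.
  simpl E. unfold p0. destruct (p0val K); reflexivity.
Qed.

Lemma nth_prefix (p : Cantor) k I : I < k -> nth I (prefix p k) false = p I.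
Proof.
  intros H. unfold prefix. rewrite nth_indep with (d' := p 0) by (rewrite length_map, length_seq; auto).
  rewrite map_nth, seq_nth by auto. reflexivity.
Qed.

Lemma goodf_prefix (p : Cantor) k I :
  goodf (enc (prefix p k)) I = 0 <-> (I < k /\ p I = true).
Proof.
  assert (Hl : length (prefix p k) = k) by (unfold prefix; rewrite length_map, length_seq; auto).
  unfold goodf. destruct (le_lt_dec (S I) k).
  - rewrite shr_enc by lia. pose proof (enc_pos (skipn (S I) (prefix p k))).
    destruct (enc (skipn (S I) (prefix p k))) eqn:Hz; [lia|]. simpl cnd.
    rewrite shr_enc by lia. rewrite skipn_nth by lia. rewrite (proj1 (par_enc _ _)).
    rewrite nth_prefix by lia. destruct (p I); simpl; split; intros; try lia; intuition discriminate.
  - rewrite shr_enc_big by lia. simpl. split; intros; lia.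
Qed.

Lemma length_prefix (p : Cantor) k : length (prefix p k) = k.
Proof. unfold prefix; rewrite length_map, length_seq; auto. Qed.

Lemma bcode_inj a b : bcode a = bcode b -> a = b.
Proof. destruct a, b; simpl; congruence. Qed.

Lemma M0_real : realizes (@rep Sier) (@rep Sier) (cont_machine M0) (fun b : Sier => b).
Proof.
  intros p x Hx. exists p. split; [|exact Hx].
  intros n. split.
  - exists (S n). unfold cont_machine, M0. rewrite length_prefix, Nat.eqb_refl.
    rewrite nth_prefix by lia. reflexivity.
  - intros k b. unfold cont_machine, M0. rewrite length_prefix.
    destruct (Nat.eqb_spec k (S n)). subst. rewrite nth_prefix by lia. intros Hb; symmetry; apply bcode_inj; exact Hb.
    destruct b; discriminate.
Qed.

Definition idH : Hom Sier Sier := exist _ (fun b : Sier => b) (ex_intro _ M0 M0_real).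

Lemma p0_name : hom_rep Sier Sier p0 idH.
Proof. exists M0. split. intros; apply p0_table. exact M0_real. Qed.

Lemma kappa_id (d : Endofunctor) (y : d Sier) : kappa d Sier y idH = y.
Proof. unfold kappa. apply fmap_id. intros; reflexivity. Qed.

Lemma good_out x n K : condf K x n = 0 ->
  goodf x (II K n (outf K x n)) = 0 /\ (outf K x n = 1 \/ outf K x n = 2).
Proof. unfold condf, outf. destruct (goodf x (II K n 1)) eqn:H; simpl; auto. Qed.

Theorem proposition6 :
  forall d : Endofunctor, computable_endofunctor d -> d_admissible d Sier.
Proof.
  intros d _. split.
  - intros y1 y2 H. rewrite <- (kappa_id d y1), <- (kappa_id d y2), H. reflexivity.
  - exists e_main. intros y p [M [Htab Hreal]].
    destruct (Hreal p0 idH p0_name) as [q [Hcq Hrq]].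
    exists q. split; [|rewrite kappa_id in Hrq; exact Hrq].
    assert (Key : forall k K n c, goodf (enc (prefix p k)) (II K n c) = 0 ->
                  M (prefix p0 K) n = c).
    { intros k K n c Hg. apply goodf_prefix in Hg as [_ Hp].
      unfold II in Hp. rewrite !npair_eq, E_eq, Htab in Hp. apply Nat.eqb_eq; auto. }
    assert (Out : forall k n v, machine e_main (prefix p k) n v -> v = bcode (q n)).
    { intros k n v Hv. apply e_sound in Hv as [K [HK ->]].
      destruct (good_out _ _ _ HK) as [Hg Hc].
      pose proof (Key _ _ _ _ Hg) as HM.
      destruct (Hcq n) as [_ Hs].
      destruct Hc as [Hc|Hc]; rewrite Hc in HM |- *;
      [specialize (Hs K false HM) | specialize (Hs K true HM)]; rewrite <- Hs; reflexivity. }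
    intros n. split.
    + destruct (Hcq n) as [[K0 HK0] _].
      set (I0 := II K0 n (bcode (q n))).
      assert (Hp : p I0 = true).
      { unfold I0, II. rewrite !npair_eq, E_eq, Htab. apply Nat.eqb_eq. exact HK0. }
      assert (Hg : goodf (enc (prefix p (S I0))) I0 = 0) by (apply goodf_prefix; auto).
      assert (Hc : condf K0 (enc (prefix p (S I0))) n = 0).
      { unfold condf. unfold I0 in *. destruct (q n); [change (bcode true) with 2 in * | change (bcode false) with 1 in *];
        destruct (goodf _ (II K0 n 1)) eqn:G1; simpl cnd; auto; congruence. }
      destruct (e_complete _ _ _ Hc) as [K [Hev _]].
      exists (S I0). pose proof (Out (S I0) n _ Hev) as Ho. rewrite <- Ho. exact Hev.
    + intros k b Hb. apply Out in Hb. apply bcode_inj. auto.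
Qed.
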